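(* In the setting described in the context, let $\mathfrak h$ be the single-electron space spanned by $c^\dagger_{r,\uparrow}\Phi_{\rm vac}$, $r\in\Lambda$, and let $\mathfrak h_{\rm L}$ (resp. $\mathfrak h_{\rm U}$) be the subspace spanned by $a^\dagger_{x,\uparrow}\Phi_{\rm vac}$, $x\in\mathcal{E}$ (resp. $b^\dagger_{u,\uparrow}\Phi_{\rm vac}$, $u\in\mathcal{I}$), so that $\mathfrak h=\mathfrak h_{\rm L}\oplus\mathfrak h_{\rm U}$. Then $H$ can be diagonalized within $\mathfrak h_{\rm L}$ and within $\mathfrak h_{\rm U}$ respectively (each is invariant under $H$). Every eigenvalue $\epsilon$ of $H$ in $\mathfrak h_{\rm L}$ satisfies $$-s\{1+(m+\ell_{\rm L})\nu^2\}\le\epsilon\le\min\{0,-s\{1+(m-\ell_{\rm L})\nu^2\}\},$$ and every eigenvalue $\epsilon$ of $H$ in $\mathfrak h_{\rm U}$ satisfies $$\max\{0,t\{1+(n-\ell_{\rm U})\nu^2\}\}\le\epsilon\le t\{1+(n+\ell_{\rm U})\nu^2\}.$$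
   Context: Lattice: fix integers $n,m\ge2$. A basic cell is a set of $n+1$ sites $\{u,x_1,\dots,x_n\}$ ($u$ internal, $x_i$ external). $\Lambda$ is formed from $M$ copies of the basic cell by identifying external sites from $m$ distinct cells as a single site (each external site lies in exactly $m$ cells); internal sites are not identified; $\Lambda$ is connected. $\mathcal{I},\mathcal{E}$ are the sets of internal and external sites; $C_u$ is the cell containing $u\in\mathcal{I}$; $\Lambda_x$ is the union of the $m$ cells containing $x\in\mathcal{E}$. Fermion operators $c_{r,\sigma}$ satisfy canonical anticommutation relations on the Fock space with vacuum $\Phi_{\rm vac}$; $n_{r,\sigma}=c^\dagger_{r,\sigma}c_{r,\sigma}$. Parameters $t,s,U,\nu>0$. $a_{x,\sigma}=c_{x,\sigma}-\nu\sum_{u\in\Lambda_x\cap\mathcal{I}}c_{u,\sigma}$ ($x\in\mathcal{E}$), $b_{u,\sigma}=c_{u,\sigma}+\nu\sum_{x\in C_u\setminus\{u\}}c_{x,\sigma}$ ($u\in\mathcal{I}$). $H=-s\sum_{x\in\mathcal{E},\sigma}a^\dagger_{x,\sigma}a_{x,\sigma}+t\sum_{u\in\mathcal{I},\sigma}b^\dagger_{u,\sigma}b_{u,\sigma}+U\sum_{r\in\Lambda}n_{r,\uparrow}n_{r,\downarrow}$. For $x,y\in\mathcal{E}$, $\ell_{x,y}=|\Lambda_x\cap\Lambda_y\cap\mathcal{I}|$ (number of cells containing both); for $u,v\in\mathcal{I}$, $\ell_{u,v}=|C_u\cap C_v\cap\mathcal{E}|$. $\ell_{\rm L}=\sum_{y\in\mathcal{E},y\ne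 x}\ell_{x,y}$ for $x\in\mathcal{E}$ and $\ell_{\rm U}=\sum_{v\in\mathcal{I},v\ne u}\ell_{u,v}$ for $u\in\mathcal{I}$ (these do not depend on the choice of $x$, resp. $u$). *)

(* Defs.v *)
From HB Require Import structures.
From mathcomp Require Import all_boot all_order all_algebra.
From mathcomp Require Import complex.
Set Implicit Arguments. Unset Strict Implicit. Unset Printing Implicit Defensive.
Import Order.TTheory GRing.Theory Num.Theory.
Local Open Scope ring_scope.

Section Hubbard.
Variable R : rcfType.
(* I = internal sites (one per cell), E = external sites;
   inc u x <=> the external site x belongs to the cell C_u. *)
Variables (I E : finType) (inc : I -> E -> bool).

(* The lattice Lambda = I (+) E, modes = site * spin (true = up). *)
Definition site := (I + E)%type.
Definition mode := (site * bool)%type.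

Definition adj : rel site := fun p q =>
  match p, q with
  | inl u, inr x => inc u x
  | inr x, inl u => inc u x
  | _, _ => false
  end.

(* Fock space over the complex numbers R[i]: functions on occupation sets. *)
Definition fock := {ffun {set mode} -> R[i]}.

(* Jordan-Wigner sign w.r.t. the canonical order (enum_rank) of modes. *)
Definition jwsign (j : mode) (S : {set mode}) : R[i] :=
  (-1) ^+ #|[set k in S | (enum_rank k < enum_rank j)%N]|.

(* annihilation / creation operators: basis |S> = prod_{k in S, increasing} c_k^dag |vac> *)
Definition cop (j : mode) (psi : fock) : fock :=
  [ffun S : {set mode} => if j \in S then 0 else jwsign j S * psi (j |: S)].
Definition cdag (j : mode) (psi : fock) : fock :=
  [ffun S : {set mode} => if j \in S then jwsign j (S :\ j) * psi (S :\ j) else 0].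
Definition numop (j : mode) (psi : fock) : fock := cdag j (cop j psi).
Definition vac : fock := [ffun S : {set mode} => (S == set0)%:R].

Variables (nu : R).

Definition aop (x : E) (sg : bool) (psi : fock) : fock :=
  cop (inr x, sg) psi - (nu%:C)%C *: \sum_(u | inc u x) cop (inl u, sg) psi.
Definition adag (x : E) (sg : bool) (psi : fock) : fock :=
  cdag (inr x, sg) psi - (nu%:C)%C *: \sum_(u | inc u x) cdag (inl u, sg) psi.
Definition bop (u : I) (sg : bool) (psi : fock) : fock :=
  cop (inl u, sg) psi + (nu%:C)%C *: \sum_(x | inc u x) cop (inr x, sg) psi.
Definition bdag (u : I) (sg : bool) (psi : fock) : fock :=
  cdag (inl u, sg) psi + (nu%:C)%C *: \sum_(x | inc u x) cdag (inr x, sg) psi.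

Variables (t s U : R).

Definition Ham (psi : fock) : fock :=
  - ((s%:C)%C) *: \sum_(x : E) \sum_(sg : bool) adag x sg (aop x sg psi)
  + (t%:C)%C *: \sum_(u : I) \sum_(sg : bool) bdag u sg (bop u sg psi)
  + (U%:C)%C *: \sum_(r : site) numop (r, true) (numop (r, false) psi).

Definition in_h (psi : fock) : Prop :=
  exists f : site -> R[i], psi = \sum_(r : site) f r *: cdag (r, true) vac.
Definition in_hL (psi : fock) : Prop :=
  exists f : E -> R[i], psi = \sum_(x : E) f x *: adag x true vac.
Definition in_hU (psi : fock) : Prop :=
  exists f : I -> R[i], psi = \sum_(u : I) f u *: bdag u true vac.

Definition diag_within (P : fock -> Prop) : Prop :=
  exists (k : nat) (v : 'I_k -> fock) (e : 'I_k -> R[i]),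
    (forall i, P (v i) /\ Ham (v i) = e i *: v i) /\
    (forall psi, P psi -> exists g : 'I_k -> R[i], psi = \sum_i g i *: v i).

Definition eigval_within (P : fock -> Prop) (eps : R[i]) : Prop :=
  exists psi, P psi /\ psi <> 0 /\ Ham psi = eps *: psi.

End Hubbard.

Definition ellE (I E : finType) (inc : I -> E -> bool) (x y : E) : nat :=
  #|[set u | inc u x && inc u y]|.
Definition ellI (I E : finType) (inc : I -> E -> bool) (u v : I) : nat :=
  #|[set x | inc u x && inc v x]|.
Definition ellL (I E : finType) (inc : I -> E -> bool) (x : E) : nat :=
  (\sum_(y : E | y != x) ellE inc x y)%N.
Definition ellU (I E : finType) (inc : I -> E -> bool) (u : I) : nat :=
  (\sum_(v : I | v != u) ellI inc u v)%N.

(* Main.v *)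
Require Import Defs.
From HB Require Import structures.
From mathcomp Require Import all_boot all_order all_algebra.
From mathcomp Require Import complex.
From mathcomp Require Import sesquilinear spectral ring lra.
Import Order.TTheory GRing.Theory Num.Theory.
Local Open Scope ring_scope.

Lemma diag_sym (C : numClosedFieldType) (T : finType) (M : T -> T -> C) :
  (forall x y, M x y = M y x) -> (forall x y, M x y \is Num.real) ->
  exists k (w : 'I_k -> T -> C) (d : 'I_k -> C),
    (forall i y, \sum_x M y x * w i x = d i * w i y) /\
    (forall g : T -> C, exists c : 'I_k -> C, forall x, g x = \sum_i c i * w i x).
Proof.
move=> Msym Mreal.
pose A : 'M[C]_#|T| := \matrix_(i, j) M (enum_val i) (enum_val j).
have An : A \is normalmx.
  apply: symmetric_normalmx.
    apply/is_hermitianmxP; rewrite expr0 scale1r map_mx_id //.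
    by apply/matrixP => i j; rewrite !mxE Msym.
  by apply/mxOverP => i j; rewrite mxE.
have /orthomx_spectralP AE := An.
set P := spectralmx A in AE; set D := spectral_diag A in AE.
have Pu : P \in unitmx by apply: spectral_unit.
have PA : P *m A = diag_mx D *m P.
  by rewrite {1}AE !mulmxA mulmxV // mul1mx.
exists #|T|, (fun i x => P i (enum_rank x)), (fun i => D 0 i); split.
  move=> i y.
  move/matrixP: PA => /(_ i (enum_rank y)).
  rewrite mul_diag_mx !mxE => <-.
  rewrite (reindex (@enum_rank T)) /=; last first.
    by exists enum_val => z _; rewrite ?enum_rankK ?enum_valK.
  by apply: eq_bigr => x _; rewrite /A mxE !enum_rankK Msym mulrC.
move=> g.
pose v : 'rV[C]_#|T| := \row_j g (enum_val j).
exists (fun i => (v *m invmx P) 0 i) => x.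
move/matrixP: (mulmxKV Pu v) => /(_ 0 (enum_rank x)).
rewrite !mxE enum_rankK => <-.
by apply: eq_bigr => i _.
Qed.

Lemma card_setEn (W : finType) (P : pred W) : #|[set w | P w]| = (\sum_w P w)%N.
Proof.
rewrite -sum1_card big_mkcond /=; apply: eq_bigr => w _.
by rewrite inE; case: (P w).
Qed.

Lemma count_off (T W : finType) (J : W -> T -> bool) (k k' : nat) :
  (forall y, #|[set w | J w y]| = k) -> (forall w, #|[set x | J w x]| = k') ->
  forall y, (\sum_(x | x != y) #|[set w | J w y && J w x]|)%N = (k * (k' - 1))%N.
Proof.
move=> Hk Hk' y.
under eq_bigr do rewrite card_setEn.
rewrite exchange_big /=.
transitivity (\sum_w (J w y) * (k' - 1))%N.
  apply: eq_bigr => w _.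
  case Jy: (J w y); last by rewrite big1 // => x _; rewrite andFb.
  rewrite mul1n.
  have := Hk' w; rewrite card_setEn (bigD1 y) //= Jy add1n => <-.
  by rewrite subSS subn0.
by rewrite -big_distrl /= -card_setEn Hk.
Qed.

Section Eig.
Variables (R : rcfType) (T W : finType) (J : W -> T -> bool) (nu : R).
Local Notation C := (R[i]).

Definition Gm (y x : T) : C :=
  (x == y)%:R + ((nu%:C)%C)^+2 * (#|[set w | J w y && J w x]|)%:R.

Lemma card_setE (P : pred W) : (#|[set w | P w]|%:R : C) = \sum_w (P w)%:R.
Proof.
rewrite -sum1_card natr_sum big_mkcond /=; apply: eq_bigr => w _.
by rewrite inE; case: (P w).
Qed.

Lemma Gm_quad (g : T -> C) :
  \sum_y (g y)^* * (\sum_x Gm y x * g x) =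
  \sum_y (g y)^* * g y + ((nu%:C)%C)^+2 *
    \sum_w (\sum_x (J w x)%:R * g x)^* * (\sum_x (J w x)%:R * g x).
Proof.
have E1 : forall y, \sum_x Gm y x * g x =
   g y + ((nu%:C)%C)^+2 * \sum_w (J w y)%:R * \sum_x (J w x)%:R * g x.
  move=> y; rewrite /Gm.
  under eq_bigr do rewrite mulrDl.
  rewrite big_split /=; congr (_ + _).
    rewrite (bigD1 y) //= eqxx mul1r big1 ?addr0 //.
    by move=> x /negbTE ->; rewrite mul0r.
  under eq_bigr do rewrite -mulrA.
  rewrite -mulr_sumr; congr (_ * _).
  transitivity (\sum_x \sum_w ((J w y)%:R * (J w x)%:R) * g x).
    apply: eq_bigr => x _; rewrite card_setE mulr_suml; apply: eq_bigr => w _.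
    by rewrite -natrM mulnb.
  rewrite exchange_big /=; apply: eq_bigr => w _.
  by rewrite mulr_sumr; apply: eq_bigr => x _; rewrite mulrA.
under eq_bigr do rewrite E1 mulrDr.
rewrite big_split /=; congr (_ + _).
under eq_bigr do rewrite mulrCA.
rewrite -mulr_sumr; congr (_ * _).
transitivity (\sum_y \sum_w (g y)^* * ((J w y)%:R * \sum_x (J w x)%:R * g x)).
  by apply: eq_bigr => y _; rewrite mulr_sumr.
rewrite exchange_big /=; apply: eq_bigr => w _.
rewrite rmorph_sum /= mulr_suml; apply: eq_bigr => y _.
by rewrite rmorphM /= conjC_nat mulrA [_ * (J w y)%:R]mulrC.
Qed.


Lemma Gm_apply (g : T -> C) y : \sum_x Gm y x * g x =
   g y + ((nu%:C)%C)^+2 * \sum_w (J w y)%:R * \sum_x (J w x)%:R * g x.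
Proof.
rewrite /Gm.
under eq_bigr do rewrite mulrDl.
rewrite big_split /=; congr (_ + _).
  rewrite (bigD1 y) //= eqxx mul1r big1 ?addr0 //.
  by move=> x /negbTE ->; rewrite mul0r.
under eq_bigr do rewrite -mulrA.
rewrite -mulr_sumr; congr (_ * _).
transitivity (\sum_x \sum_w ((J w y)%:R * (J w x)%:R) * g x).
  apply: eq_bigr => x _; rewrite card_setE mulr_suml; apply: eq_bigr => w _.
  by rewrite -natrM mulnb.
rewrite exchange_big /=; apply: eq_bigr => w _.
by rewrite mulr_sumr; apply: eq_bigr => x _; rewrite mulrA.
Qed.

Lemma Gm_ge1 (g : T -> C) (lam : C) :
  (forall y, \sum_x Gm y x * g x = lam * g y) -> (exists y, g y != 0) -> 1 <= lam.
Proof.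
move=> Heig [y0 gy0].
have nu2 : 0 <= ((nu%:C)%C)^+2 :> C by rewrite -rmorphXn /= ler0c sqr_ge0.
set S := \sum_y (g y)^* * g y.
set Q := \sum_w (\sum_x (J w x)%:R * g x)^* * (\sum_x (J w x)%:R * g x).
have Sgt0 : 0 < S.
  rewrite /S (bigD1 y0) //=; apply: ltr_wpDr.
    by apply: sumr_ge0 => y _; rewrite mulrC mul_conjC_ge0.
  by rewrite mulrC mul_conjC_gt0.
have Qge0 : 0 <= Q by apply: sumr_ge0 => w _; rewrite mulrC mul_conjC_ge0.
have HSQ : lam * S = S + ((nu%:C)%C)^+2 * Q.
  rewrite -Gm_quad /S mulr_sumr; apply: eq_bigr => y _.
  by rewrite Heig mulrCA.
have -> : lam = 1 + ((nu%:C)%C)^+2 * Q / S.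
  apply: (mulIf (lt0r_neq0 Sgt0)); rewrite HSQ mulrDl mul1r divfK //.
  exact: lt0r_neq0.
by rewrite lerDl; apply: mulr_ge0; [exact: mulr_ge0|rewrite invr_ge0 ltW].
Qed.

Lemma Gm_eig (k L : nat) (g : T -> C) (lam : C) :
  (forall y, \sum_x Gm y x * g x = lam * g y) -> (exists y, g y != 0) ->
  (forall y, #|[set w | J w y]| = k) ->
  (forall y, (\sum_(x | x != y) #|[set w | J w y && J w x]|)%N = L) ->
  exists r : R, lam = (r%:C)%C /\ 1 <= r /\
    r <= 1 + (k + L)%:R * nu ^+ 2 /\ 1 + (k%:R - L%:R) * nu ^+ 2 <= r.
Proof.
move=> Heig [y0 gy0] Hk HL.
have nu2 : 0 <= ((nu%:C)%C)^+2 :> C by rewrite -rmorphXn /= ler0c sqr_ge0.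
set S := \sum_y (g y)^* * g y.
set Q := \sum_w (\sum_x (J w x)%:R * g x)^* * (\sum_x (J w x)%:R * g x).
have Sgt0 : 0 < S.
  rewrite /S (bigD1 y0) //=; apply: ltr_wpDr.
    by apply: sumr_ge0 => y _; rewrite mulrC mul_conjC_ge0.
  by rewrite mulrC mul_conjC_gt0.
have Qge0 : 0 <= Q by apply: sumr_ge0 => w _; rewrite mulrC mul_conjC_ge0.
have HSQ : lam * S = S + ((nu%:C)%C)^+2 * Q.
  rewrite -Gm_quad /S mulr_sumr; apply: eq_bigr => y _.
  by rewrite Heig mulrCA.
have lam1 : 1 <= lam.
  have -> : lam = 1 + ((nu%:C)%C)^+2 * Q / S.
    apply: (mulIf (lt0r_neq0 Sgt0)); rewrite HSQ mulrDl mul1r divfK //.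
    exact: lt0r_neq0.
  by rewrite lerDl; apply: mulr_ge0; [exact: mulr_ge0|rewrite invr_ge0 ltW].
have lamR : lam \is Num.real by apply: ger0_real; apply: le_trans lam1.
set r := @complex.Re R lam.
have lamE : lam = (r%:C)%C by rewrite /r RRe_real.
exists r; split => //.
have r1 : 1 <= r by move: lam1; rewrite lamE -[1 : C]/((1%:C)%C) lecR.
have [y ymax] : exists y, forall x, `|g x| <= `|g y|.
  case: (@comparable_arg_maxP _ _ T y0 predT (fun x => `|g x|)) => //.
    by move=> i j _ _; apply: real_comparable; apply: normr_real.
  by move=> y _ Hy; exists y => x; apply: Hy.
have gy : 0 < `|g y| by apply: lt_le_trans (ymax y0); rewrite normr_gt0.
have cE : Gm y y = 1 + ((nu%:C)%C)^+2 * k%:R.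
  rewrite /Gm eqxx -(Hk y); congr (_ + _ * _%:R); apply: eq_card => w.
  by rewrite !inE andbb.
have Goff : forall x, x != y -> Gm y x = ((nu%:C)%C)^+2 * #|[set w | J w y && J w x]|%:R.
  by move=> x /negbTE xy; rewrite /Gm xy add0r.
have Hoff : (lam - Gm y y) * g y = \sum_(x | x != y) Gm y x * g x.
  by rewrite mulrBl -Heig (bigD1 y) //= addrAC subrr add0r.
have Hsum : \sum_(x | x != y) Gm y x = ((nu%:C)%C)^+2 * L%:R.
  rewrite -(HL y) natr_sum mulr_sumr; apply: eq_bigr => x xy; exact: Goff.
have Hn : `|lam - Gm y y| <= ((nu%:C)%C)^+2 * L%:R.
  rewrite -(ler_pM2r gy) -normrM Hoff -Hsum mulr_suml.
  apply: le_trans (ler_norm_sum _ _ _) _; apply: ler_sum => x xy.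
  have G0 : 0 <= Gm y x by rewrite Goff // mulr_ge0.
  by rewrite normrM (ger0_norm G0) ler_wpM2l.
have E1 : lam - Gm y y = ((r - (1 + nu^+2 * k%:R))%:C)%C.
  by rewrite lamE cE rmorphB rmorphD rmorph1 rmorphM rmorphXn rmorph_nat.
have E2 : ((nu%:C)%C)^+2 * L%:R = ((nu^+2 * L%:R)%:C)%C :> C.
  by rewrite rmorphM rmorphXn rmorph_nat.
move: Hn; rewrite E1 E2 real_ler_norml; last by apply/complex_realP; eexists.
rewrite -rmorphN /= !lecR => /andP[h1 h2].
rewrite natrD; split; nra.
Qed.

Lemma Gm_sym y x : Gm y x = Gm x y.
Proof.
rewrite /Gm eq_sym; congr (_ + _ * _%:R); apply: eq_card => w.
by rewrite !inE andbC.
Qed.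

Lemma Gm_real y x : Gm y x \is Num.real.
Proof.
rewrite /Gm rpredD ?realn // rpredM ?realn // rpredX //.
by apply/complex_realP; eexists.
Qed.

End Eig.

Section Fock.
Variables (R : rcfType) (I E : finType).
Local Notation C := (R[i]).
Local Notation fock := (fock R I E).
Local Notation mode := (mode I E).

Lemma scCE (a x : C) : a *: x = a * x. Proof. by []. Qed.

Fact cop_lin (j : mode) : linear (@cop R I E j).
Proof.
move=> a p q; apply/ffunP=> S; rewrite !ffunE; case: ifP => _.
  by rewrite scaler0 addr0.
by rewrite mulrDr scCE mulrCA.
Qed.
HB.instance Definition _ (j : mode) :=
  GRing.isLinear.Build C fock fock *:%R (@cop R I E j) (cop_lin j).

Fact cdag_lin (j : mode) : linear (@cdag R I E j).
Proof.
move=> a p q; apply/ffunP=> S; rewrite !ffunE; case: ifP => _.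
  by rewrite mulrDr scCE mulrCA.
by rewrite scaler0 addr0.
Qed.
HB.instance Definition _ (j : mode) :=
  GRing.isLinear.Build C fock fock *:%R (@cdag R I E j) (cdag_lin j).


Lemma jwsign0 (j : mode) : jwsign R j set0 = 1.
Proof.
rewrite /jwsign (_ : [set k in set0 | _] = set0) ?cards0 ?expr0 //.
by apply/setP => k; rewrite !inE.
Qed.

Lemma cdag_vac (j : mode) : cdag j (vac R I E) = [ffun S => (S == [set j])%:R].
Proof.
apply/ffunP => S; rewrite !ffunE; case: ifP => jS.
  case: (S =P [set j]) => [->|Sj].
    by rewrite setDv eqxx jwsign0 mulr1.
  rewrite (_ : (S :\ j == set0) = false) ?mulr0 //.
  apply/negbTE/eqP => S0; apply: Sj.
  by rewrite -(setD1K jS) S0 setU0.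
case: (S =P [set j]) => // Sj.
by move: jS; rewrite Sj set11.
Qed.

Lemma cop_vac (j : mode) : cop j (vac R I E) = 0.
Proof.
apply/ffunP => S; rewrite !ffunE; case: ifP => // _.
rewrite (_ : (j |: S == set0) = false) ?mulr0 //.
by apply/negbTE/set0Pn; exists j; rewrite setU11.
Qed.

Lemma cop_del (j k : mode) : cop j (cdag k (vac R I E)) = (j == k)%:R *: vac R I E.
Proof.
rewrite cdag_vac; apply/ffunP => S; rewrite !ffunE scCE; case: ifP => jS.
  rewrite (_ : (S == set0) = false) ?mulr0 //.
  by apply/negbTE/set0Pn; exists j.
case: (S =P set0) => [->|S0].
  rewrite setU0 jwsign0 mul1r mulr1.
  by congr (GRing.natmul _ (nat_of_bool _)); apply/eqP/eqP => [/set1_inj|->].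
rewrite mulr0 (_ : (j |: S == [set k]) = false) ?mulr0 //.
apply/negbTE/eqP => h.
have /set0Pn[x xS] : S != set0 by apply/eqP.
have : x \in [set k] by rewrite -h setU1r.
have : j \in [set k] by rewrite -h setU11.
rewrite !inE => /eqP jk /eqP xk.
by move: jS; rewrite jk -xk xS.
Qed.


Variables (inc : I -> E -> bool) (nu : R).
Local Notation site := (site I E).
Local Notation vac := (vac R I E).

Definition vec (f : site -> C) : fock := \sum_(r : site) f r *: cdag (r, true) vac.
Definition alpha (x : E) (r : site) : C :=
  match r with inl u => - (nu%:C)%C * (inc u x)%:R | inr y => (y == x)%:R end.
Definition beta (u : I) (r : site) : C :=
  match r with inl v => (v == u)%:R | inr x => (nu%:C)%C * (inc u x)%:R end.
Definition dot (a f : site -> C) : C := \sum_r a r * f r.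

Lemma cop_vec (r : site) (sg : bool) f :
  cop (r, sg) (vec f) = (if sg then f r else 0) *: vac.
Proof.
rewrite /vec linear_sum /=.
under eq_bigr do rewrite linearZ /= cop_del scalerA.
rewrite -scaler_suml; congr (_ *: _).
case: sg.
  rewrite (bigD1 r) //= eqxx mulr1 big1 ?addr0 // => r' rr'.
  by rewrite xpair_eqE eq_sym (negbTE rr') mulr0.
by rewrite big1 // => r' _; rewrite xpair_eqE andbF mulr0.
Qed.

Lemma dot_alpha x f : dot (alpha x) f = f (inr x) - (nu%:C)%C * \sum_(u | inc u x) f (inl u).
Proof.
rewrite /dot big_sumType /= addrC; congr (_ + _).
  rewrite (bigD1 x) //= eqxx mul1r big1 ?addr0 // => y yx.
  by rewrite (negbTE yx) mul0r.
rewrite mulr_sumr -sumrN [RHS]big_mkcond /=; apply: eq_bigr => u _.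
by case: (inc u x); rewrite ?mulr1 ?mulr0 ?mul0r ?oppr0 // mulNr.
Qed.

Lemma dot_beta u f : dot (beta u) f = f (inl u) + (nu%:C)%C * \sum_(x | inc u x) f (inr x).
Proof.
rewrite /dot big_sumType /=; congr (_ + _).
  rewrite (bigD1 u) //= eqxx mul1r big1 ?addr0 // => v vu.
  by rewrite (negbTE vu) mul0r.
rewrite mulr_sumr [RHS]big_mkcond /=; apply: eq_bigr => x _.
by case: (inc u x); rewrite ?mulr1 ?mulr0 ?mul0r.
Qed.

Lemma aop_vec x sg f :
  aop inc nu x sg (vec f) = (if sg then dot (alpha x) f else 0) *: vac.
Proof.
rewrite /aop cop_vec; under eq_bigr do rewrite cop_vec.
case: sg.
  by rewrite dot_alpha -scaler_suml scalerA scalerBl.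
by rewrite big1 ?scaler0 ?subr0 // => u _; rewrite scale0r.
Qed.

Lemma bop_vec u sg f :
  bop inc nu u sg (vec f) = (if sg then dot (beta u) f else 0) *: vac.
Proof.
rewrite /bop cop_vec; under eq_bigr do rewrite cop_vec.
case: sg.
  by rewrite dot_beta -scaler_suml scalerA scalerDl.
by rewrite big1 ?scaler0 ?addr0 // => x _; rewrite scale0r.
Qed.


Lemma adagZ x sg (c : C) p : adag inc nu x sg (c *: p) = c *: adag inc nu x sg p.
Proof.
rewrite /adag linearZ /=; under eq_bigr do rewrite linearZ /=.
by rewrite -scaler_sumr scalerBr !scalerA mulrC.
Qed.

Lemma bdagZ u sg (c : C) p : bdag inc nu u sg (c *: p) = c *: bdag inc nu u sg p.
Proof.
rewrite /bdag linearZ /=; under eq_bigr do rewrite linearZ /=.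
by rewrite -scaler_sumr scalerDr !scalerA mulrC.
Qed.

Lemma adag0 x sg : adag inc nu x sg 0 = 0.
Proof. by rewrite /adag linear0 big1 ?scaler0 ?subr0 // => u _; rewrite linear0. Qed.

Lemma bdag0 u sg : bdag inc nu u sg 0 = 0.
Proof. by rewrite /bdag linear0 big1 ?scaler0 ?addr0 // => v _; rewrite linear0. Qed.

Lemma adag_vac x : adag inc nu x true vac = vec (alpha x).
Proof.
rewrite /adag /vec big_sumType /= addrC; congr (_ + _).
  rewrite (bigD1 x) //= eqxx scale1r big1 ?addr0 // => y yx.
  by rewrite (negbTE yx) scale0r.
rewrite scaler_sumr -sumrN [LHS]big_mkcond /=; apply: eq_bigr => u _.
by case: (inc u x); rewrite ?mulr1 ?mulr0 ?scale0r ?oppr0 // scaleNr.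
Qed.

Lemma bdag_vac u : bdag inc nu u true vac = vec (beta u).
Proof.
rewrite /bdag /vec big_sumType /=; congr (_ + _).
  rewrite (bigD1 u) //= eqxx scale1r big1 ?addr0 // => v vu.
  by rewrite (negbTE vu) scale0r.
rewrite scaler_sumr [LHS]big_mkcond /=; apply: eq_bigr => x _.
by case: (inc u x); rewrite ?mulr1 ?mulr0 ?scale0r // scalerA.
Qed.

Lemma Ham_vec (t s U : R) f :
  Ham inc nu t s U (vec f) =
  - (s%:C)%C *: \sum_x dot (alpha x) f *: vec (alpha x) +
  (t%:C)%C *: \sum_u dot (beta u) f *: vec (beta u).
Proof.
rewrite /Ham.
rewrite (_ : \sum_(r : site) numop (r, true) (numop (r, false) (vec f)) = 0).
  2: by apply: big1 => r _; rewrite /numop cop_vec scale0r !linear0.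
rewrite scaler0 addr0.
congr (_ *: _ + _ *: _); apply: eq_bigr => z _; rewrite big_bool /=.
  by rewrite !aop_vec scale0r adagZ adag0 addr0 adag_vac.
by rewrite !bop_vec scale0r bdagZ bdag0 addr0 bdag_vac.
Qed.

Lemma vec_sum (T : finType) (g : T -> C) (a : T -> site -> C) :
  \sum_x g x *: vec (a x) = vec (fun r => \sum_x g x * a x r).
Proof.
rewrite /vec; under eq_bigr do rewrite scaler_sumr.
rewrite exchange_big /=; apply: eq_bigr => r _.
by rewrite scaler_suml; apply: eq_bigr => x _; rewrite scalerA.
Qed.

Lemma vec_eval f r : vec f [set (r, true)] = f r.
Proof.
rewrite /vec sum_ffunE (bigD1 r) //= big1 ?addr0.
  by rewrite ffunE cdag_vac ffunE eqxx scCE mulr1.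
move=> r' rr'; rewrite ffunE cdag_vac ffunE scCE.
rewrite (_ : ([set (r, true)] == [set (r', true)]) = false) ?mulr0 //.
by apply/negbTE/eqP => /set1_inj [] /eqP; rewrite eq_sym (negbTE rr').
Qed.

Lemma vec_inj f g : vec f = vec g -> forall r, f r = g r.
Proof. by move=> h r; rewrite -!vec_eval h. Qed.


Lemma sum_pick (T : finType) (c : T -> C) y0 : \sum_y c y * (y0 == y)%:R = c y0.
Proof.
rewrite (bigD1 y0) //= eqxx mulr1 big1 ?addr0 // => y yy.
by rewrite eq_sym (negbTE yy) mulr0.
Qed.

Lemma sum_pick' (T : finType) (c : T -> C) y0 : \sum_y c y * (y == y0)%:R = c y0.
Proof. by under eq_bigr do rewrite eq_sym; apply: sum_pick. Qed.

Lemma sum_cond (T : finType) (P : pred T) (c : T -> C) :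
  \sum_(y | P y) c y = \sum_y (P y)%:R * c y.
Proof. by rewrite big_mkcond; apply: eq_bigr => y _; case: (P y); rewrite ?mul1r ?mul0r. Qed.

Local Notation GE := (Gm R E I inc nu).
Local Notation JU := (fun (x : E) (u : I) => inc u x).
Local Notation GI := (Gm R I E JU nu).

Lemma dot_aa y x : dot (alpha y) (alpha x) = GE y x.
Proof.
rewrite dot_alpha /Gm /= eq_sym; congr (_ + _).
rewrite card_setE sum_cond -mulrN -sumrN expr2 -mulrA; congr (_ * _).
rewrite mulr_sumr; apply: eq_bigr => u _; rewrite mulrCA mulNr opprK -natrM mulnb.
by [].
Qed.

Lemma dot_ba u x : dot (beta u) (alpha x) = 0.
Proof.
rewrite dot_beta /= sum_cond.
by rewrite sum_pick' mulNr addNr.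
Qed.

Lemma dot_ab x u : dot (alpha x) (beta u) = 0.
Proof.
rewrite dot_alpha /= sum_cond.
by rewrite sum_pick' subrr.
Qed.

Lemma dot_bb v u : dot (beta v) (beta u) = GI v u.
Proof.
rewrite dot_beta /Gm /= eq_sym; congr (_ + _).
rewrite card_setE sum_cond expr2 -mulrA; congr (_ * _).
by rewrite mulr_sumr; apply: eq_bigr => x _; rewrite mulrCA -natrM mulnb.
Qed.

Lemma dot_lin (T : finType) a (g : T -> C) (b : T -> site -> C) :
  dot a (fun r => \sum_x g x * b x r) = \sum_x g x * dot a (b x).
Proof.
rewrite /dot; under eq_bigr do rewrite mulr_sumr.
rewrite exchange_big /=; apply: eq_bigr => x _.
by rewrite mulr_sumr; apply: eq_bigr => r _; rewrite mulrCA.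
Qed.

Lemma HamL (t s U : R) (g : E -> C) :
  Ham inc nu t s U (\sum_x g x *: vec (alpha x)) =
  \sum_y (- (s%:C)%C * \sum_x GE y x * g x) *: vec (alpha y).
Proof.
rewrite vec_sum Ham_vec.
rewrite (_ : \sum_u _ *: vec (beta u) = 0) ?scaler0 ?addr0; last first.
  apply: big1 => u _; rewrite dot_lin big1 ?scale0r // => x _.
  by rewrite dot_ba mulr0.
rewrite scaler_sumr; apply: eq_bigr => y _; rewrite scalerA dot_lin.
by congr ((_ * _) *: _); apply: eq_bigr => x _; rewrite dot_aa mulrC.
Qed.

Lemma HamU (t s U : R) (g : I -> C) :
  Ham inc nu t s U (\sum_u g u *: vec (beta u)) =
  \sum_v ((t%:C)%C * \sum_u GI v u * g u) *: vec (beta v).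
Proof.
rewrite vec_sum Ham_vec.
rewrite (_ : \sum_x _ *: vec (alpha x) = 0) ?scaler0 ?add0r; last first.
  apply: big1 => x _; rewrite dot_lin big1 ?scale0r // => u _.
  by rewrite dot_ab mulr0.
rewrite scaler_sumr; apply: eq_bigr => v _; rewrite scalerA dot_lin.
by congr ((_ * _) *: _); apply: eq_bigr => u _; rewrite dot_bb mulrC.
Qed.

Lemma coefL (c d : E -> C) :
  \sum_y c y *: vec (alpha y) = \sum_y d y *: vec (alpha y) -> forall y, c y = d y.
Proof.
rewrite !vec_sum => /vec_inj h y; move: (h (inr y)) => /=.
by rewrite !sum_pick.
Qed.

Lemma coefU (c d : I -> C) :
  \sum_v c v *: vec (beta v) = \sum_v d v *: vec (beta v) -> forall v, c v = d v.
Proof.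
rewrite !vec_sum => /vec_inj h v; move: (h (inl v)) => /=.
by rewrite !sum_pick.
Qed.

Lemma indep (g : E -> C) (h : I -> C) :
  (forall r, \sum_x g x * alpha x r + \sum_u h u * beta u r = 0) ->
  (forall x, g x = 0) /\ (forall u, h u = 0).
Proof.
move=> H0.
have hE : forall u, h u = (nu%:C)%C * \sum_x (inc u x)%:R * g x.
  move=> u; have := H0 (inl u); rewrite /= sum_pick => /eqP.
  rewrite addrC addr_eq0 => /eqP ->; rewrite -sumrN mulr_sumr.
  by apply: eq_bigr => x _; ring.
have gE : forall y, \sum_x GE y x * g x = 0 * g y.
  move=> y; rewrite mul0r Gm_apply.
  have e := H0 (inr y); rewrite /= sum_pick in e.
  apply: etrans e; congr (_ + _).
  by rewrite mulr_sumr; apply: eq_bigr => u _; rewrite hE; ring.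
have g0 : forall x, g x = 0.
  move=> x; apply/eqP/negP => /negP gx.
  have := @Gm_ge1 R E I inc nu g 0 gE (ex_intro _ x gx).
  by rewrite ler10.
split => // u; rewrite hE big1 ?mulr0 // => x _; by rewrite g0 mulr0.
Qed.

Definition rowv (q : site) : site -> C :=
  match q with inl u => beta u | inr x => alpha x end.

Lemma span_all (f : site -> C) : exists (g : E -> C) (h : I -> C),
  forall r, f r = \sum_x g x * alpha x r + \sum_u h u * beta u r.
Proof.
pose M : 'M[C]_#|{: I + E}| := \matrix_(i, j) rowv (enum_val i) (enum_val j).
have Mf : row_free M.
  apply: inj_row_free => v vM.
  pose c q := v 0 (enum_rank q).
  have H0 : forall r, \sum_x c (inr x) * alpha x r + \sum_u c (inl u) * beta u r = 0.
    move=> r; move/matrixP: vM => /(_ 0 (enum_rank r)); rewrite !mxE => e.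
    apply: etrans e.
    rewrite (reindex (@enum_rank (I + E)%type)) /=; last first.
      by exists enum_val => z _; rewrite ?enum_rankK ?enum_valK.
    rewrite big_sumType addrC; congr (_ + _); apply: eq_bigr => z _;
    by rewrite /M mxE !enum_rankK.
  have [g0 h0] := @indep _ _ H0.
  apply/rowP => i; rewrite mxE -(enum_valK i).
  by case: (enum_val i) => [u|x]; [apply: h0|apply: g0].
have Mu : M \in unitmx by rewrite -row_free_unit.
pose v : 'rV[C]_#|{: I + E}| := \row_j f (enum_val j).
pose c q := (v *m invmx M) 0 (enum_rank q).
exists (fun x => c (inr x)), (fun u => c (inl u)) => r.
move/matrixP: (mulmxKV Mu v) => /(_ 0 (enum_rank r)).
rewrite !mxE enum_rankK => <-.
rewrite (reindex (@enum_rank (I + E)%type)) /=; last first.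
  by exists enum_val => z _; rewrite ?enum_rankK ?enum_valK.
rewrite big_sumType addrC; congr (_ + _); apply: eq_bigr => z _;
by rewrite /M [X in _ * X]mxE !enum_rankK.
Qed.


Lemma vec_ext f f' : (forall r, f r = f' r) -> vec f = vec f'.
Proof. by move=> e; apply: eq_bigr => r _; rewrite e. Qed.

Lemma vecD f f' : vec (fun r => f r + f' r) = vec f + vec f'.
Proof. by rewrite /vec -big_split; apply: eq_bigr => r _; rewrite scalerDl. Qed.

Lemma hL_form psi : in_hL inc nu psi <-> exists g : E -> C, psi = \sum_x g x *: vec (alpha x).
Proof.
by split => -[g ->]; exists g; apply: eq_bigr => x _; rewrite adag_vac.
Qed.

Lemma hU_form psi : in_hU inc nu psi <-> exists g : I -> C, psi = \sum_u g u *: vec (beta u).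
Proof.
by split => -[g ->]; exists g; apply: eq_bigr => x _; rewrite bdag_vac.
Qed.

End Fock.

Theorem proposition1 (R : rcfType) (n m : nat) (I E : finType)
  (inc : I -> E -> bool) (t s U nu : R) :
  (2 <= n)%N -> (2 <= m)%N ->
  (forall u : I, #|[set x | inc u x]| = n) ->
  (forall x : E, #|[set u | inc u x]| = m) ->
  (forall p q : site I E, connect (adj inc) p q) ->
  0 < t -> 0 < s -> 0 < U -> 0 < nu ->
  let H := Ham inc nu t s U in
  let hL := in_hL inc nu in
  let hU := in_hU inc nu in
  let h := @in_h R I E in
  (* h = h_L (+) h_U *)
  ((forall psi, h psi -> exists phi1 phi2, hL phi1 /\ hU phi2 /\ psi = phi1 + phi2)
   /\ (forall psi, hL psi -> h psi) /\ (forall psi, hU psi -> h psi)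
   /\ (forall psi, hL psi -> hU psi -> psi = 0)) /\
  (* invariance and diagonalizability *)
  (forall psi, hL psi -> hL (H psi)) /\ (forall psi, hU psi -> hU (H psi)) /\
  diag_within inc nu t s U hL /\ diag_within inc nu t s U hU /\
  (* eigenvalue bounds *)
  (forall (x0 : E) (eps : R[i]), eigval_within inc nu t s U hL eps ->
     exists r : R, eps = (r%:C)%C /\
       - (s * (1 + (m + ellL inc x0)%:R * nu ^+ 2)) <= r /\
       r <= Num.min 0 (- (s * (1 + (m%:R - (ellL inc x0)%:R) * nu ^+ 2)))) /\
  (forall (u0 : I) (eps : R[i]), eigval_within inc nu t s U hU eps ->
     exists r : R, eps = (r%:C)%C /\
       Num.max 0 (t * (1 + (n%:R - (ellU inc u0)%:R) * nu ^+ 2)) <= r /\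
       r <= t * (1 + (n + ellU inc u0)%:R * nu ^+ 2)).
Proof.
move=> hn hm HcI HcE _ ht hs _ _; cbv zeta.
have Hcnt : forall y : E, (\sum_(x | x != y) #|[set w | inc w y && inc w x]|)%N = ellL inc y.
  by move=> y; apply: eq_bigr => x _.
have HLc : forall y : E, (\sum_(x | x != y) #|[set w | inc w y && inc w x]|)%N = (m * (n - 1))%N.
  exact: count_off.
have HUc : forall u : I, (\sum_(v | v != u) #|[set w | inc u w && inc v w]|)%N = (n * (m - 1))%N.
  exact: (@count_off I E (fun x u => inc u x)).
have sC : (s%:C)%C != 0 :> R[i] by rewrite fmorph_eq0 gt_eqF.
have tC : (t%:C)%C != 0 :> R[i] by rewrite fmorph_eq0 gt_eqF.
split; [split; [|split; [|split]]|split; [|split; [|split; [|split; [|split]]]]].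
- move=> psi [f ->].
  have [g [h' Hf]] := @span_all R I E inc nu f.
  exists (\sum_x g x *: vec R I E (alpha R I E inc nu x)), (\sum_u h' u *: vec R I E (beta R I E inc nu u)).
  split; first by apply/hL_form; exists g.
  split; first by apply/hU_form; exists h'.
  change (vec R I E f = \sum_x g x *: vec R I E (alpha R I E inc nu x) + \sum_u h' u *: vec R I E (beta R I E inc nu u)).
  by rewrite !vec_sum -vecD; apply: vec_ext.
- move=> psi /hL_form [g ->]; exists (fun r => \sum_x g x * alpha R I E inc nu x r).
  exact: vec_sum.
- move=> psi /hU_form [g ->]; exists (fun r => \sum_u g u * beta R I E inc nu u r).
  exact: vec_sum.
- move=> psi /hL_form [g ->] /hU_form [h' e].
  rewrite !vec_sum in e; have e2 := @vec_inj _ _ _ _ _ e.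
  have [g0 _] : (forall x, g x = 0) /\ (forall u, - h' u = 0).
    apply: (@indep R I E inc nu g (fun u => - h' u)) => r. under [X in _ + X]eq_bigr do rewrite mulNr.
    by rewrite sumrN (e2 r) subrr.
  by apply: big1 => x _; rewrite g0 scale0r.
- move=> psi /hL_form [g ->]; apply/hL_form; rewrite HamL; eexists; reflexivity.
- move=> psi /hU_form [g ->]; apply/hU_form; rewrite HamU; eexists; reflexivity.
- have [k [w [d [Hw Hspan]]]] := @diag_sym _ _ (Gm R E I inc nu)
    (@Gm_sym R E I inc nu) (@Gm_real R E I inc nu).
  exists k, (fun i => \sum_x w i x *: vec R I E (alpha R I E inc nu x)), (fun i => - (s%:C)%C * d i).
  split.
    move=> i; split; first by apply/hL_form; exists (w i).
    by rewrite HamL scaler_sumr; apply: eq_bigr => y _; rewrite Hw scalerA mulrA.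
  move=> psi /hL_form [g ->]; have [c Hc] := Hspan g; exists c.
  rewrite (eq_bigr (fun x => (\sum_i c i * w i x) *: vec R I E (alpha R I E inc nu x))); last first.
    by move=> x _; rewrite Hc.
  under eq_bigr do rewrite scaler_suml.
  rewrite exchange_big; apply: eq_bigr => i _; rewrite scaler_sumr.
  by apply: eq_bigr => x _; rewrite scalerA.
- have [k [w [d [Hw Hspan]]]] := @diag_sym _ _ (Gm R I E (fun x u => inc u x) nu)
    (@Gm_sym R I E (fun x u => inc u x) nu) (@Gm_real R I E (fun x u => inc u x) nu).
  exists k, (fun i => \sum_u w i u *: vec R I E (beta R I E inc nu u)), (fun i => (t%:C)%C * d i).
  split.
    move=> i; split; first by apply/hU_form; exists (w i).
    by rewrite HamU scaler_sumr; apply: eq_bigr => y _; rewrite Hw scalerA mulrA.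
  move=> psi /hU_form [g ->]; have [c Hc] := Hspan g; exists c.
  rewrite (eq_bigr (fun x => (\sum_i c i * w i x) *: vec R I E (beta R I E inc nu x))); last first.
    by move=> x _; rewrite Hc.
  under eq_bigr do rewrite scaler_suml.
  rewrite exchange_big; apply: eq_bigr => i _; rewrite scaler_sumr.
  by apply: eq_bigr => x _; rewrite scalerA.
- move=> x0 eps [psi [/hL_form [g ->] [psi0 Heq]]].
  have Hc := @coefL R I E inc nu (fun y => - (s%:C)%C * \sum_x Gm R E I inc nu y x * g x)
    (fun y => eps * g y).
  have {}Hc : forall y, - (s%:C)%C * \sum_x Gm R E I inc nu y x * g x = eps * g y.
    apply: Hc; rewrite -(@HamL R I E inc nu t s U) Heq scaler_sumr; apply: eq_bigr => y _.
    by rewrite scalerA.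
  have nz : - (s%:C)%C != 0 :> R[i] by rewrite oppr_eq0.
  have Heig : forall y, \sum_x Gm R E I inc nu y x * g x = (- (eps / (s%:C)%C)) * g y.
    move=> y; rewrite -[LHS](mulKf nz) Hc invrN; ring.
  have [y gy] : exists y, g y != 0.
    case: (pickP (fun y => g y != 0)) => [y gy|none]; first by exists y.
    exfalso; apply: psi0; apply: big1 => y _.
    by move: (none y) => /negbFE/eqP ->; rewrite scale0r.
  have [r [lamE [r1 [rup rlo]]]] := @Gm_eig R E I inc nu m (ellL inc x0) g _ Heig
    (ex_intro _ y gy) HcE (fun y' => etrans (HLc y') (esym (etrans (esym (Hcnt x0)) (HLc x0)))).
  exists (- (s * r)); split.
    rewrite rmorphN rmorphM /=.
    transitivity (- ((s%:C)%C * (- (eps / (s%:C)%C)))).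
      by rewrite mulrN opprK mulrCA mulfV // mulr1.
    by congr (- (_ * _)); exact: lamE.
  split; first by nra.
  by rewrite le_min; apply/andP; split; nra.
- move=> u0 eps [psi [/hU_form [g ->] [psi0 Heq]]].
  have Hc := @coefU R I E inc nu
    (fun v => (t%:C)%C * \sum_u Gm R I E (fun x u => inc u x) nu v u * g u)
    (fun v => eps * g v).
  have {}Hc : forall v, (t%:C)%C * \sum_u Gm R I E (fun x u => inc u x) nu v u * g u = eps * g v.
    apply: Hc; rewrite -(@HamU R I E inc nu t s U) Heq scaler_sumr; apply: eq_bigr => y _.
    by rewrite scalerA.
  have Heig : forall v, \sum_u Gm R I E (fun x u => inc u x) nu v u * g u = (eps / (t%:C)%C) * g v.
    move=> v; rewrite -[LHS](mulKf tC) Hc; ring.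
  have [y gy] : exists y, g y != 0.
    case: (pickP (fun y => g y != 0)) => [y gy|none]; first by exists y.
    exfalso; apply: psi0; apply: big1 => y _.
    by move: (none y) => /negbFE/eqP ->; rewrite scale0r.
  have [r [lamE [r1 [rup rlo]]]] := @Gm_eig R I E (fun x u => inc u x) nu n (ellU inc u0) g _ Heig
    (ex_intro _ y gy) HcI (fun v => etrans (HUc v) (esym (HUc u0))).
  exists (t * r); split.
    rewrite rmorphM /=.
    transitivity ((t%:C)%C * (eps / (t%:C)%C)).
      by rewrite mulrCA mulfV // mulr1.
    by congr (_ * _); exact: lamE.
  split; last by nra.
  by rewrite ge_max; apply/andP; split; nra.
Qed.
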